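(* For every set of formulas $\Gamma$ and formula $\phi$: if $\Gamma\models_{\mathbf{VC}}\phi$ then $\Gamma\vdash_{\mathbf{VC}}\phi$.
   Context: Formulas: built from propositional variables and the constant $\bot$ using $\lnot$, the binary connectives $\supset,\land,\lor$, and two binary conditional operators $[\phi]\psi$ and $\langle\phi\rangle\psi$ (treated as primitive by tableau rules). $\top$ abbreviates $\lnot\bot$. Segerberg model: $M=\langle U,P,R,V\rangle$ with $U\neq\emptyset$, $P\subseteq\wp(U)$, $R:P\to\wp(U\times U)$, $V:\mathrm{Var}\to P$, such that $\emptyset,U\in P$; $P$ is closed under complement, binary intersection and union; and for $S,T\in P$, $\{x\in U\mid R_S(x)\subseteq T\}\in P$, where $R_S=R(S)$ and $R_S(x)=\{y\mid (x,y)\in R_S\}$. Truth: $M,x\not\models\bot$; $M,x\models p$ iff $x\in V(p)$; Boolean connectives as usual; $M,x\models[\phi]\psi$ iff $M,y\models\psi$ for all $y\in R_\phi(x)$; $M,x\models\langle\phi\rangle\psi$ iff $M,y\models\psi$ for some $y\in R_\phi(x)$; here $\|\phi\|=\{x\mid M,x\models\phi\}$ and $R_\phi=R_{\|\phi\|}$. A $\mathbf{VC}$-model is a Segerberg model such that for all $S,T\in P$ and $x\in U$: (1) $R_S(x)\subseteq S$; (2) $R_S(x)\cap T\neq\emptyset\Rightarrow R_T(x)\neq\emptyset$; (3) $R_U(x)\subseteq\{x\}$; (4) $x\in R_U(x)$; (5) $R_S(x)\cap T\subseteq R_{S\cap T}(x)$; (6) $R_S(x)\cap T\neq\emptyset\Rightarrow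 R_{S\cap T}(x)\subseteq R_S(x)\cap T$. $\Gamma\models_{\mathbf{VC}}\phi$ iff for every $\mathbf{VC}$-model $M$ and world $x$ with $M,x\models\psi$ for all $\psi\in\Gamma$, $M,x\models\phi$. Tableaux: indices are positive integers. Prefixed formulas are $i:\phi$ and $i\,r_\phi\,j$. For a set $\Gamma$ of formulas and a formula $\phi$, a tableau for $(\Gamma,\phi)$ is a finite downward-branching tree labelled by prefixed formulas, each either an assumption ($1:\psi$ with $\psi\in\Gamma$, or $1:\lnot\phi$) or obtained by applying a branch extension rule to prefixed formulas on its branch; non-branching rules append their conclusions, branching rules split the branch into one child per alternative, each alternative appending its listed conclusions. A branch is closed if it contains $i:\chi$ and $i:\lnot\chi$, or $i:\bot$; a tableau is closed if all branches are closed. $\Gamma\vdash_{\mathbf{VC}}\phi$ means there is a closed $\mathbf{VC}$-tableau for $(\Gamma,\phi)$. Basic rules: from $i:\phi\land\psi$ add $i:\phi,i:\psi$; from $i:\lnot(\phi\land\psi)$ branch $i:\lnot\phi\mid i:\lnot\psi$; from $i:\phi\lor\psi$ branch $i:\phi\mid i:\psi$; from $i:\lnot(\phi\lor\psi)$ add $i:\lnot\phi,i:\lnot\psi$; from $i:\phi\supset\psi$ branch $i:\lnot\phi\mid i:\psi$; from $i:\lnot(\phi\supset\psi)$ add $i:\phi,i:\lnot\psi$; from $i:\lnot\lnot\phi$ add $i:\phi$; ($\Box$) from $i:[\phi]\psi$ and $i\,r_\phi\,j$ add $j:\psi$; ($\lnot\Box$) from $i:\lnot[\phi]\psi$ add $i\,r_\phi\,j$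 and $j:\lnot\psi$, $j$ new; ($\Diamond$) from $i:\langle\phi\rangle\psi$ add $i\,r_\phi\,j$ and $j:\psi$, $j$ new; ($\lnot\Diamond$) from $i:\lnot\langle\phi\rangle\psi$ and $i\,r_\phi\,j$ add $j:\lnot\psi$. (cut) for any index $i$ already on the branch and any $\phi$, branch $i:\phi\mid i:\lnot\phi$. (ea) from $i\,r_\phi\,j$ and any $\psi$, branch ($k:\lnot\phi$, $k:\psi$) $\mid$ ($k:\phi$, $k:\lnot\psi$) $\mid$ $i\,r_\psi\,j$, $k$ new. (R1) from $i\,r_\phi\,j$ add $j:\phi$. (R2) from $j:\psi$ and $i\,r_\phi\,j$ add $i\,r_\psi\,k$, $k$ new. (R3) from $i:\phi$, $j:\lnot\phi$, $i\,r_\top\,j$ add $j:\phi$. (R4) for any index $i$ on the branch add $i\,r_\top\,i$. (R5) from $j:\psi$ and $i\,r_\phi\,j$ add $i\,r_{\phi\land\psi}\,j$. (R6) from $j:\psi$, $i\,r_\phi\,j$, $i\,r_{\phi\land\psi}\,k$ add $k:\psi$ and $i\,r_\phi\,k$. $\mathbf{VC}$-tableaux use all of these rules. *)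

(* Defs.v *)
From Stdlib Require Import List.
Import ListNotations.

Inductive form : Type :=
| Var : nat -> form
| Bot : form
| Neg : form -> form
| Imp : form -> form -> form
| And : form -> form -> form
| Or  : form -> form -> form
| Box : form -> form -> form
| Dia : form -> form -> form.

Definition Top : form := Neg Bot.

Record SegModel : Type := {
  U : Type;
  P : (U -> Prop) -> Prop;
  R : (U -> Prop) -> U -> U -> Prop;   (* R S x y  <->  (x,y) in R_S *)
  V : nat -> U -> Prop;
  U_nonempty : inhabited U;
  V_in_P : forall p, P (V p);
  P_empty : P (fun _ => False);
  P_full : P (fun _ => True);
  P_compl : forall S, P S -> P (fun x => ~ S x);
  P_inter : forall S T, P S -> P T -> P (fun x => S x /\ T x);
  P_union : forall S T, P S -> P T -> P (fun x => S x \/ T x);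
  P_box : forall S T, P S -> P T -> P (fun x => forall y, R S x y -> T y)
}.

Fixpoint sat (M : SegModel) (f : form) (x : U M) {struct f} : Prop :=
  match f with
  | Var p => V M p x
  | Bot => False
  | Neg a => ~ sat M a x
  | Imp a b => sat M a x -> sat M b x
  | And a b => sat M a x /\ sat M b x
  | Or a b => sat M a x \/ sat M b x
  | Box a b => forall y, R M (fun z => sat M a z) x y -> sat M b y
  | Dia a b => exists y, R M (fun z => sat M a z) x y /\ sat M b y
  end.

Definition isVC (M : SegModel) : Prop :=
  forall (S T : U M -> Prop) (x : U M), P M S -> P M T ->
    (forall y, R M S x y -> S y)
 /\ ((exists y, R M S x y /\ T y) -> exists y, R M T x y)
 /\ (forall y, R M (fun _ => True) x y -> y = x)
 /\ R M (fun _ => True) x x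
 /\ (forall y, R M S x y /\ T y -> R M (fun z => S z /\ T z) x y)
 /\ ((exists y, R M S x y /\ T y) ->
       forall y, R M (fun z => S z /\ T z) x y -> R M S x y /\ T y).

Definition VC_consequence (Gamma : form -> Prop) (phi : form) : Prop :=
  forall (M : SegModel) (x : U M), isVC M ->
    (forall psi, Gamma psi -> sat M psi x) -> sat M phi x.

(* prefixed formulas: i:phi  and  i r_phi j ; indices are positive integers *)
Inductive pform : Type :=
| PF : nat -> form -> pform
| PR : nat -> form -> nat -> pform.

Definition branch := list pform.

Definition idx_on (B : branch) (i : nat) : Prop :=
  exists pf, In pf B /\
    match pf with PF k _ => k = i | PR k _ l => k = i \/ l = i end.

Definition fresh (B : branch) (j : nat) : Prop := j <> 0 /\ ~ idx_on B j.

Definition closed_branch (B : branch) : Prop :=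
  (exists i chi, In (PF i chi) B /\ In (PF i (Neg chi)) B) \/
  (exists i, In (PF i Bot) B).

(* rule B alts : a VC branch extension rule is applicable to premises on B,
   yielding the list of alternatives (one per child), each a list of
   conclusions to append. *)
Inductive rule (B : branch) : list (list pform) -> Prop :=
| r_and i a b : In (PF i (And a b)) B -> rule B [[PF i a; PF i b]]
| r_nand i a b : In (PF i (Neg (And a b))) B ->
    rule B [[PF i (Neg a)]; [PF i (Neg b)]]
| r_or i a b : In (PF i (Or a b)) B -> rule B [[PF i a]; [PF i b]]
| r_nor i a b : In (PF i (Neg (Or a b))) B ->
    rule B [[PF i (Neg a); PF i (Neg b)]]
| r_imp i a b : In (PF i (Imp a b)) B -> rule B [[PF i (Neg a)]; [PF i b]]
| r_nimp i a b : In (PF i (Neg (Imp a b))) B ->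
    rule B [[PF i a; PF i (Neg b)]]
| r_nn i a : In (PF i (Neg (Neg a))) B -> rule B [[PF i a]]
| r_box i j a b : In (PF i (Box a b)) B -> In (PR i a j) B ->
    rule B [[PF j b]]
| r_nbox i j a b : In (PF i (Neg (Box a b))) B -> fresh B j ->
    rule B [[PR i a j; PF j (Neg b)]]
| r_dia i j a b : In (PF i (Dia a b)) B -> fresh B j ->
    rule B [[PR i a j; PF j b]]
| r_ndia i j a b : In (PF i (Neg (Dia a b))) B -> In (PR i a j) B ->
    rule B [[PF j (Neg b)]]
| r_cut i a : idx_on B i -> rule B [[PF i a]; [PF i (Neg a)]]
| r_ea i j k a b : In (PR i a j) B -> fresh B k ->
    rule B [[PF k (Neg a); PF k b]; [PF k a; PF k (Neg b)]; [PR i b j]]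
| r_R1 i j a : In (PR i a j) B -> rule B [[PF j a]]
| r_R2 i j k a b : In (PF j b) B -> In (PR i a j) B -> fresh B k ->
    rule B [[PR i b k]]
| r_R3 i j a : In (PF i a) B -> In (PF j (Neg a)) B -> In (PR i Top j) B ->
    rule B [[PF j a]]
| r_R4 i : idx_on B i -> rule B [[PR i Top i]]
| r_R5 i j a b : In (PF j b) B -> In (PR i a j) B ->
    rule B [[PR i (And a b) j]]
| r_R6 i j k a b : In (PF j b) B -> In (PR i a j) B ->
    In (PR i (And a b) k) B -> rule B [[PF k b; PR i a k]].

(* closable Gamma phi B : the branch B (built so far, as a list of nodes)
   can be extended to a finite tableau for (Gamma, phi) all of whose
   branches are closed. *)
Inductive closable (Gamma : form -> Prop) (phi : form) : branch -> Prop :=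
| cl_closed B : closed_branch B -> closable Gamma phi B
| cl_assum B psi : Gamma psi -> closable Gamma phi (PF 1 psi :: B) ->
    closable Gamma phi B
| cl_negconcl B : closable Gamma phi (PF 1 (Neg phi) :: B) ->
    closable Gamma phi B
| cl_rule B alts : rule B alts ->
    (forall a, In a alts -> closable Gamma phi (rev a ++ B)) ->
    closable Gamma phi B.

Definition VC_derivable (Gamma : form -> Prop) (phi : form) : Prop :=
  closable Gamma phi [].

(* Main.v *)
Require Import Defs.
From Stdlib Require Import List Arith Lia Cantor Classical ClassicalEpsilon.
From Stdlib Require Import FunctionalExtensionality PropExtensionality ProofIrrelevance.
Import ListNotations.

Fixpoint fdec (fuel n : nat) : form :=
  match fuel with
  | 0 => Bot
  | S f =>
    let (tag, r) := Cantor.of_nat n in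
    let (x, y) := Cantor.of_nat r in
    match tag with
    | 0 => Var r | 1 => Bot | 2 => Neg (fdec f r)
    | 3 => Imp (fdec f x) (fdec f y)
    | 4 => And (fdec f x) (fdec f y)
    | 5 => Or (fdec f x) (fdec f y)
    | 6 => Box (fdec f x) (fdec f y)
    | _ => Dia (fdec f x) (fdec f y)
    end
  end.

Fixpoint fenc (a : form) : nat :=
  match a with
  | Var p => Cantor.to_nat (0, p)
  | Bot => Cantor.to_nat (1, 0)
  | Neg a => Cantor.to_nat (2, fenc a)
  | Imp a b => Cantor.to_nat (3, Cantor.to_nat (fenc a, fenc b))
  | And a b => Cantor.to_nat (4, Cantor.to_nat (fenc a, fenc b))
  | Or a b => Cantor.to_nat (5, Cantor.to_nat (fenc a, fenc b))
  | Box a b => Cantor.to_nat (6, Cantor.to_nat (fenc a, fenc b))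
  | Dia a b => Cantor.to_nat (7, Cantor.to_nat (fenc a, fenc b))
  end.

Fixpoint fsize (a : form) : nat :=
  match a with
  | Var _ | Bot => 1
  | Neg a => S (fsize a)
  | Imp a b | And a b | Or a b | Box a b | Dia a b => S (fsize a + fsize b)
  end.

Lemma fdec_enc a : forall fuel, fsize a <= fuel -> fdec fuel (fenc a) = a.
Proof.
  induction a; intros [|f] Hf; cbn [fsize] in Hf; try lia;
  cbn [fenc fdec]; rewrite Cantor.cancel_of_to; cbv beta iota;
  rewrite ?Cantor.cancel_of_to; cbv beta iota; try reflexivity;
  first [ rewrite IHa by lia; reflexivity
        | rewrite IHa1 by lia; rewrite IHa2 by lia; reflexivity
        | destruct (Cantor.of_nat _); try rewrite IHa by lia; reflexivity ].
Qed.

Definition form_of (n : nat) : form := let (f, c) := Cantor.of_nat n in fdec f c.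

Lemma form_of_surj a : exists n, form_of n = a.
Proof.
  exists (Cantor.to_nat (fsize a, fenc a)). unfold form_of.
  rewrite Cantor.cancel_of_to. apply fdec_enc. lia.
Qed.

Record task := mkT { tk : nat; ti : nat; tj : nat; tkk : nat; ta : form; tb : form }.

Definition task_of (n : nat) : task :=
  let (kd, r1) := Cantor.of_nat n in
  let (i, r2) := Cantor.of_nat r1 in
  let (j, r3) := Cantor.of_nat r2 in
  let (k, r4) := Cantor.of_nat r3 in
  let (na, nb) := Cantor.of_nat r4 in
  mkT kd i j k (form_of na) (form_of nb).

Lemma task_of_surj t : exists n, task_of n = t.
Proof.
  destruct t as [kd i j k a b].
  destruct (form_of_surj a) as [na Ha]. destruct (form_of_surj b) as [nb Hb].
  exists (Cantor.to_nat (kd, Cantor.to_nat (i, Cantor.to_nat (j, Cantor.to_nat (k, Cantor.to_nat (na, nb)))))).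
  unfold task_of. rewrite !Cantor.cancel_of_to. rewrite Ha, Hb. reflexivity.
Qed.

Definition task_at (n : nat) : task := task_of (fst (Cantor.of_nat n)).

Lemma task_at_often t m : exists n, m <= n /\ task_at n = t.
Proof.
  destruct (task_of_surj t) as [c Hc].
  exists (Cantor.to_nat (c, m)). split.
  - pose proof (Cantor.to_nat_non_decreasing c m). lia.
  - unfold task_at. rewrite Cantor.cancel_of_to. exact Hc.
Qed.

Definition pmax (pf : pform) : nat :=
  match pf with PF k _ => k | PR k _ l => Nat.max k l end.
Definition maxidx (B : branch) : nat := fold_right (fun pf m => Nat.max (pmax pf) m) 0 B.

Lemma idx_le B i : idx_on B i -> i <= maxidx B.
Proof.
  intros [pf [Hin Hm]]. induction B as [|q B IH]; simpl in *; [contradiction|].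
  destruct Hin as [<-|Hin].
  - destruct q; simpl in *; lia.
  - specialize (IH Hin). lia.
Qed.

Lemma fresh_max B : fresh B (S (maxidx B)).
Proof. split; [lia|]. intro H. apply idx_le in H. lia. Qed.
From Stdlib Require Import List Arith Lia Classical ClassicalEpsilon.
Import ListNotations.

Section Compl.
Variable Gamma : form -> Prop.
Variable phi : form.

Notation cl := (closable Gamma phi).

Lemma pick B alts : rule B alts -> ~ cl B -> exists a, In a alts /\ ~ cl (rev a ++ B).
Proof.
  intros Hr Hn. apply NNPP. intro H. apply Hn. apply cl_rule with alts; auto.
  intros a Ha. apply NNPP. intro H2. apply H. eauto.
Qed.

Definition Good (t : task) (B B' : branch) : Prop :=
  let i := ti t in let j := tj t in let k := tkk t in let a := ta t in let b := tb t in
  match tk t with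
  | 0 => Gamma a -> In (PF 1 a) B'
  | 1 => In (PF i (And a b)) B -> In (PF i a) B' /\ In (PF i b) B'
  | 2 => In (PF i (Neg (And a b))) B -> In (PF i (Neg a)) B' \/ In (PF i (Neg b)) B'
  | 3 => In (PF i (Or a b)) B -> In (PF i a) B' \/ In (PF i b) B'
  | 4 => In (PF i (Neg (Or a b))) B -> In (PF i (Neg a)) B' /\ In (PF i (Neg b)) B'
  | 5 => In (PF i (Imp a b)) B -> In (PF i (Neg a)) B' \/ In (PF i b) B'
  | 6 => In (PF i (Neg (Imp a b))) B -> In (PF i a) B' /\ In (PF i (Neg b)) B'
  | 7 => In (PF i (Box a b)) B -> In (PR i a j) B -> In (PF j b) B'
  | 8 => In (PF i (Neg (Box a b))) B -> exists j, In (PR i a j) B' /\ In (PF j (Neg b)) B'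
  | 9 => In (PF i (Dia a b)) B -> exists j, In (PR i a j) B' /\ In (PF j b) B'
  | 10 => In (PF i (Neg (Dia a b))) B -> In (PR i a j) B -> In (PF j (Neg b)) B'
  | 11 => idx_on B i -> In (PF i a) B' \/ In (PF i (Neg a)) B'
  | 12 => In (PR i a j) B -> (exists k, (In (PF k (Neg a)) B' /\ In (PF k b) B') \/
                                        (In (PF k a) B' /\ In (PF k (Neg b)) B'))
                             \/ In (PR i b j) B'
  | 13 => In (PR i a j) B -> In (PF j a) B'
  | 14 => In (PF j b) B -> In (PR i a j) B -> exists k, In (PR i b k) B'
  | 15 => In (PF i a) B -> In (PF j (Neg a)) B -> In (PR i Top j) B -> In (PF j a) B'
  | 16 => idx_on B i -> In (PR i Top i) B'
  | 17 => In (PF j b) B -> In (PR i a j) B -> In (PR i (And a b) j) B'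
  | 18 => In (PF j b) B -> In (PR i a j) B -> In (PR i (And a b) k) B ->
          In (PF k b) B' /\ In (PR i a k) B'
  | _ => True
  end.

Ltac nopre H := exists []; simpl; split; [assumption | intros; exfalso; tauto].
Ltac useR Hn r :=
  destruct (pick _ _ r Hn) as [al [Hal Hc]]; exists (rev al); split; [exact Hc|];
  simpl in Hal; repeat destruct Hal as [<-|Hal]; try contradiction; simpl.

Lemma step_ex t B : ~ cl B -> exists l, ~ cl (l ++ B) /\ Good t B (l ++ B).
Proof.
  intro Hn. destruct t as [kd i j k a b]. unfold Good; simpl.
  destruct kd as [|[|[|[|[|[|[|[|[|[|[|[|[|[|[|[|[|[|[|kd]]]]]]]]]]]]]]]]]]].
  - destruct (classic (Gamma a)) as [H|H]; [|nopre H].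
    exists [PF 1 a]. split; [|simpl; auto].
    intro Hc. apply Hn. eapply cl_assum; eauto.
  - destruct (classic (In (PF i (And a b)) B)) as [H|H]; [|nopre H].
    useR Hn (r_and B i a b H); intros; auto.
  - destruct (classic (In (PF i (Neg (And a b))) B)) as [H|H]; [|nopre H].
    useR Hn (r_nand B i a b H); intros; auto.
  - destruct (classic (In (PF i (Or a b)) B)) as [H|H]; [|nopre H].
    useR Hn (r_or B i a b H); intros; auto.
  - destruct (classic (In (PF i (Neg (Or a b))) B)) as [H|H]; [|nopre H].
    useR Hn (r_nor B i a b H); intros; auto.
  - destruct (classic (In (PF i (Imp a b)) B)) as [H|H]; [|nopre H].
    useR Hn (r_imp B i a b H); intros; auto.
  - destruct (classic (In (PF i (Neg (Imp a b))) B)) as [H|H]; [|nopre H].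
    useR Hn (r_nimp B i a b H); intros; auto.
  - destruct (classic (In (PF i (Box a b)) B /\ In (PR i a j) B)) as [[H H']|H]; [|nopre H].
    useR Hn (r_box B i j a b H H'); intros; auto.
  - destruct (classic (In (PF i (Neg (Box a b))) B)) as [H|H]; [|nopre H].
    pose proof (fresh_max B) as Hf; remember (S (maxidx B)) as m.
    useR Hn (r_nbox B i m a b H Hf); intros; exists m; auto.
  - destruct (classic (In (PF i (Dia a b)) B)) as [H|H]; [|nopre H].
    pose proof (fresh_max B) as Hf; remember (S (maxidx B)) as m.
    useR Hn (r_dia B i m a b H Hf); intros; exists m; auto.
  - destruct (classic (In (PF i (Neg (Dia a b))) B /\ In (PR i a j) B)) as [[H H']|H]; [|nopre H].
    useR Hn (r_ndia B i j a b H H'); intros; auto.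
  - destruct (classic (idx_on B i)) as [H|H]; [|nopre H].
    useR Hn (r_cut B i a H); intros; auto.
  - destruct (classic (In (PR i a j) B)) as [H|H]; [|nopre H].
    pose proof (fresh_max B) as Hf; remember (S (maxidx B)) as m.
    useR Hn (r_ea B i j m a b H Hf); intros;
      [left; exists m; left; auto
      |left; exists m; right; auto
      |right; auto].
  - destruct (classic (In (PR i a j) B)) as [H|H]; [|nopre H].
    useR Hn (r_R1 B i j a H); intros; auto.
  - destruct (classic (In (PF j b) B /\ In (PR i a j) B)) as [[H H']|H]; [|nopre H].
    pose proof (fresh_max B) as Hf; remember (S (maxidx B)) as m.
    useR Hn (r_R2 B i j m a b H H' Hf); intros; exists m; auto.
  - destruct (classic (In (PF i a) B /\ In (PF j (Neg a)) B /\ In (PR i Top j) B)) as [[H [H' H'']]|H]; [|nopre H].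
    useR Hn (r_R3 B i j a H H' H''); intros; auto.
  - destruct (classic (idx_on B i)) as [H|H]; [|nopre H].
    useR Hn (r_R4 B i H); intros; auto.
  - destruct (classic (In (PF j b) B /\ In (PR i a j) B)) as [[H H']|H]; [|nopre H].
    useR Hn (r_R5 B i j a b H H'); intros; auto.
  - destruct (classic (In (PF j b) B /\ In (PR i a j) B /\ In (PR i (And a b) k) B)) as [[H [H' H'']]|H]; [|nopre H].
    useR Hn (r_R6 B i j k a b H H' H''); intros; auto.
  - exists []. simpl. auto.
Qed.


Hypothesis Hnc : ~ cl [].

Lemma start : ~ cl [PF 1 (Neg phi)].
Proof. intro H. apply Hnc. apply cl_negconcl. exact H. Qed.

Definition NC := {B : branch | ~ cl B}.

Definition stepf (t : task) (B : NC) : NC :=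
  let s := constructive_indefinite_description _ (step_ex t (proj1_sig B) (proj2_sig B)) in
  exist _ (proj1_sig s ++ proj1_sig B) (proj1 (proj2_sig s)).

Fixpoint chain (n : nat) : NC :=
  match n with
  | 0 => exist (fun B => ~ cl B) [PF 1 (Neg phi)] start
  | S n => stepf (task_at n) (chain n)
  end.

Definition seqB n := proj1_sig (chain n).

Lemma seqB_nc n : ~ cl (seqB n).
Proof. exact (proj2_sig (chain n)). Qed.

Lemma seqB_good n : Good (task_at n) (seqB n) (seqB (S n)).
Proof.
  unfold seqB. simpl. unfold stepf. simpl.
  destruct (constructive_indefinite_description _ _) as [l [H1 H2]]. simpl. exact H2.
Qed.

Lemma seqB_ext n : exists l, seqB (S n) = l ++ seqB n.
Proof.
  unfold seqB. simpl. unfold stepf. simpl.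
  destruct (constructive_indefinite_description _ _) as [l [H1 H2]]. simpl. eauto.
Qed.

Lemma mono n m x : n <= m -> In x (seqB n) -> In x (seqB m).
Proof.
  induction 1; auto. intro H'. destruct (seqB_ext m) as [l Hl]. rewrite Hl.
  apply in_or_app. auto.
Qed.

Lemma mono_idx n m i : n <= m -> idx_on (seqB n) i -> idx_on (seqB m) i.
Proof. intros Hle [pf [H1 H2]]. exists pf. split; auto. eapply mono; eauto. Qed.

Definition Hin x := exists n, In x (seqB n).
Definition Ix i := exists n, idx_on (seqB n) i.

Lemma goodAt t m : exists n, m <= n /\ Good t (seqB n) (seqB (S n)).
Proof.
  destruct (task_at_often t m) as [n [H1 H2]]. exists n. split; auto.
  rewrite <- H2. apply seqB_good.
Qed.

Lemma cons i a : Hin (PF i a) -> Hin (PF i (Neg a)) -> False.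
Proof.
  intros [m1 H1] [m2 H2]. apply (seqB_nc (m1 + m2)). apply cl_closed. left.
  exists i, a. split; [apply (mono m1) | apply (mono m2)]; auto; lia.
Qed.

Lemma nobot i : ~ Hin (PF i Bot).
Proof.
  intros [m H]. apply (seqB_nc m). apply cl_closed. right. eauto.
Qed.

Lemma Ix_PF i a : Hin (PF i a) -> Ix i.
Proof. intros [m H]. exists m. exists (PF i a). auto. Qed.
Lemma Ix_PR1 i a j : Hin (PR i a j) -> Ix i.
Proof. intros [m H]. exists m. exists (PR i a j). auto. Qed.
Lemma Ix_PR2 i a j : Hin (PR i a j) -> Ix j.
Proof. intros [m H]. exists m. exists (PR i a j). auto. Qed.

Ltac mon := match goal with H : In ?x (seqB ?m) |- In ?x (seqB _) => apply (mono m); [lia|exact H] end.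

Ltac G1 t m := let n := fresh "n" in let Hle := fresh "Hle" in let G := fresh "G" in
  destruct (goodAt t m) as [n [Hle G]]; unfold Good in G; simpl in G.

Lemma s_cut i a : Ix i -> Hin (PF i a) \/ Hin (PF i (Neg a)).
Proof.
  intros [m Hm]. G1 (mkT 11 i 0 0 a Bot) m.
  destruct (G (mono_idx _ _ _ Hle Hm)); [left|right]; eexists; eauto.
Qed.

Lemma s_and i a b : Hin (PF i (And a b)) -> Hin (PF i a) /\ Hin (PF i b).
Proof.
  intros [m Hm]. G1 (mkT 1 i 0 0 a b) m.
  destruct (G (mono _ _ _ Hle Hm)); split; eexists; eauto.
Qed.
Lemma s_nand i a b : Hin (PF i (Neg (And a b))) -> Hin (PF i (Neg a)) \/ Hin (PF i (Neg b)).
Proof.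
  intros [m Hm]. G1 (mkT 2 i 0 0 a b) m.
  destruct (G (mono _ _ _ Hle Hm)); [left|right]; eexists; eauto.
Qed.
Lemma s_or i a b : Hin (PF i (Or a b)) -> Hin (PF i a) \/ Hin (PF i b).
Proof.
  intros [m Hm]. G1 (mkT 3 i 0 0 a b) m.
  destruct (G (mono _ _ _ Hle Hm)); [left|right]; eexists; eauto.
Qed.
Lemma s_nor i a b : Hin (PF i (Neg (Or a b))) -> Hin (PF i (Neg a)) /\ Hin (PF i (Neg b)).
Proof.
  intros [m Hm]. G1 (mkT 4 i 0 0 a b) m.
  destruct (G (mono _ _ _ Hle Hm)); split; eexists; eauto.
Qed.
Lemma s_imp i a b : Hin (PF i (Imp a b)) -> Hin (PF i (Neg a)) \/ Hin (PF i b).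
Proof.
  intros [m Hm]. G1 (mkT 5 i 0 0 a b) m.
  destruct (G (mono _ _ _ Hle Hm)); [left|right]; eexists; eauto.
Qed.
Lemma s_nimp i a b : Hin (PF i (Neg (Imp a b))) -> Hin (PF i a) /\ Hin (PF i (Neg b)).
Proof.
  intros [m Hm]. G1 (mkT 6 i 0 0 a b) m.
  destruct (G (mono _ _ _ Hle Hm)); split; eexists; eauto.
Qed.
Lemma s_box i j a b : Hin (PF i (Box a b)) -> Hin (PR i a j) -> Hin (PF j b).
Proof.
  intros [m1 H1] [m2 H2]. G1 (mkT 7 i j 0 a b) (m1 + m2).
  eexists. apply G; mon.
Qed.
Lemma s_nbox i a b : Hin (PF i (Neg (Box a b))) -> exists j, Hin (PR i a j) /\ Hin (PF j (Neg b)).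
Proof.
  intros [m Hm]. G1 (mkT 8 i 0 0 a b) m.
  destruct (G (mono _ _ _ Hle Hm)) as [j [? ?]]; exists j; split; eexists; eauto.
Qed.
Lemma s_dia i a b : Hin (PF i (Dia a b)) -> exists j, Hin (PR i a j) /\ Hin (PF j b).
Proof.
  intros [m Hm]. G1 (mkT 9 i 0 0 a b) m.
  destruct (G (mono _ _ _ Hle Hm)) as [j [? ?]]; exists j; split; eexists; eauto.
Qed.
Lemma s_ndia i j a b : Hin (PF i (Neg (Dia a b))) -> Hin (PR i a j) -> Hin (PF j (Neg b)).
Proof.
  intros [m1 H1] [m2 H2]. G1 (mkT 10 i j 0 a b) (m1 + m2).
  eexists. apply G; mon.
Qed.
Lemma s_ea i j a b : Hin (PR i a j) ->
  (exists k, (Hin (PF k (Neg a)) /\ Hin (PF k b)) \/ (Hin (PF k a) /\ Hin (PF k (Neg b))))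
  \/ Hin (PR i b j).
Proof.
  intros [m Hm]. G1 (mkT 12 i j 0 a b) m.
  destruct (G (mono _ _ _ Hle Hm)) as [[k [[? ?]|[? ?]]]|?].
  - left. exists k. left. split; eexists; eauto.
  - left. exists k. right. split; eexists; eauto.
  - right. eexists; eauto.
Qed.
Lemma s_R1 i j a : Hin (PR i a j) -> Hin (PF j a).
Proof.
  intros [m Hm]. G1 (mkT 13 i j 0 a Bot) m. eexists. apply G. eapply mono; eauto.
Qed.
Lemma s_R2 i j a b : Hin (PF j b) -> Hin (PR i a j) -> exists k, Hin (PR i b k).
Proof.
  intros [m1 H1] [m2 H2]. G1 (mkT 14 i j 0 a b) (m1 + m2).
  destruct G as [k Hk]; try (mon). exists k. eexists; eauto.
Qed.
Lemma s_R3 i j a : Hin (PF i a) -> Hin (PF j (Neg a)) -> Hin (PR i Top j) -> Hin (PF j a).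
Proof.
  intros [m1 H1] [m2 H2] [m3 H3]. G1 (mkT 15 i j 0 a Bot) (m1 + m2 + m3).
  eexists. apply G; mon.
Qed.
Lemma s_R4 i : Ix i -> Hin (PR i Top i).
Proof.
  intros [m Hm]. G1 (mkT 16 i 0 0 Bot Bot) m. eexists. apply G. eapply mono_idx; eauto.
Qed.
Lemma s_R5 i j a b : Hin (PF j b) -> Hin (PR i a j) -> Hin (PR i (And a b) j).
Proof.
  intros [m1 H1] [m2 H2]. G1 (mkT 17 i j 0 a b) (m1 + m2).
  eexists. apply G; mon.
Qed.
Lemma s_R6 i j k a b : Hin (PF j b) -> Hin (PR i a j) -> Hin (PR i (And a b) k) ->
  Hin (PF k b) /\ Hin (PR i a k).
Proof.
  intros [m1 H1] [m2 H2] [m3 H3]. G1 (mkT 18 i j k a b) (m1 + m2 + m3).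
  destruct G; try (mon). split; eexists; eauto.
Qed.
Lemma s_assum a : Gamma a -> Hin (PF 1 a).
Proof.
  intro H. G1 (mkT 0 0 0 0 a Bot) 0. eexists. apply G. exact H.
Qed.



Definition W := {X : form -> Prop | exists i, Ix i /\ X = fun a => Hin (PF i a)}.
Definition mem (w : W) (a : form) : Prop := proj1_sig w a.
Definition mkW i (H : Ix i) : W :=
  exist _ (fun a => Hin (PF i a)) (ex_intro _ i (conj H eq_refl)).

Lemma mem_of w : exists i, Ix i /\ forall a, mem w a <-> Hin (PF i a).
Proof. destruct w as [X [i [Hi ->]]]. exists i. split; simpl; tauto. Qed.

Lemma negI i a : Ix i -> (Hin (PF i (Neg a)) <-> ~ Hin (PF i a)).
Proof.
  intro Hi. split.
  - intros H1 H2. exact (cons i a H2 H1).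
  - intro H. destruct (s_cut i a Hi); tauto.
Qed.
Lemma andI i a b : Ix i -> (Hin (PF i (And a b)) <-> Hin (PF i a) /\ Hin (PF i b)).
Proof.
  intro Hi. split; [apply s_and|]. intros [Ha Hb].
  destruct (s_cut i (And a b) Hi) as [?|Hn]; auto.
  destruct (s_nand _ _ _ Hn) as [H|H]; exfalso; [exact (cons _ _ Ha H)|exact (cons _ _ Hb H)].
Qed.
Lemma orI i a b : Ix i -> (Hin (PF i (Or a b)) <-> Hin (PF i a) \/ Hin (PF i b)).
Proof.
  intro Hi. split; [apply s_or|]. intros Hab.
  destruct (s_cut i (Or a b) Hi) as [?|Hn]; auto.
  destruct (s_nor _ _ _ Hn) as [H1 H2]; exfalso; destruct Hab as [Ha|Hb]; [exact (cons _ _ Ha H1)|exact (cons _ _ Hb H2)].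
Qed.
Lemma impI i a b : Ix i -> (Hin (PF i (Imp a b)) <-> (Hin (PF i a) -> Hin (PF i b))).
Proof.
  intro Hi. split.
  - intros H Ha. destruct (s_imp _ _ _ H) as [H1|H1]; auto. exfalso; exact (cons _ _ Ha H1).
  - intros Hab. destruct (s_cut i (Imp a b) Hi) as [?|Hn]; auto.
    destruct (s_nimp _ _ _ Hn) as [H1 H2]; exfalso; exact (cons _ _ (Hab H1) H2).
Qed.
Lemma topI i : Ix i -> Hin (PF i Top).
Proof. intro Hi. unfold Top. apply negI; auto. apply nobot. Qed.

Lemma memNeg w a : mem w (Neg a) <-> ~ mem w a.
Proof. destruct (mem_of w) as [i [Hi H]]. rewrite !H. apply negI; auto. Qed.
Lemma memAnd w a b : mem w (And a b) <-> mem w a /\ mem w b.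
Proof. destruct (mem_of w) as [i [Hi H]]. rewrite !H. apply andI; auto. Qed.
Lemma memOr w a b : mem w (Or a b) <-> mem w a \/ mem w b.
Proof. destruct (mem_of w) as [i [Hi H]]. rewrite !H. apply orI; auto. Qed.
Lemma memImp w a b : mem w (Imp a b) <-> (mem w a -> mem w b).
Proof. destruct (mem_of w) as [i [Hi H]]. rewrite !H. apply impI; auto. Qed.
Lemma memBot w : ~ mem w Bot.
Proof. destruct (mem_of w) as [i [Hi H]]. rewrite H. apply nobot. Qed.
Lemma memTop w : mem w Top.
Proof. destruct (mem_of w) as [i [Hi H]]. rewrite H. apply topI; auto. Qed.

Definition Rm (S : W -> Prop) (w v : W) : Prop :=
  exists i j c, (forall a, mem w a <-> Hin (PF i a)) /\ (forall a, mem v a <-> Hin (PF j a)) /\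
    (forall z, S z <-> mem z c) /\ Hin (PR i c j).

Lemma Rnorm i j c a : Hin (PR i c j) ->
  (forall k, Ix k -> (Hin (PF k c) <-> Hin (PF k a))) -> Hin (PR i a j).
Proof.
  intros Hr He. destruct (s_ea i j c a Hr) as [[k [[H1 H2]|[H1 H2]]]|H]; auto; exfalso.
  - pose proof (Ix_PF _ _ H1) as Hk. apply (cons k c); auto. apply He; auto.
  - pose proof (Ix_PF _ _ H1) as Hk. apply (cons k a); auto. apply He; auto.
Qed.

Lemma ext_ix (S : W -> Prop) c a : (forall z, S z <-> mem z c) -> (forall z, S z <-> mem z a) ->
  forall k, Ix k -> (Hin (PF k c) <-> Hin (PF k a)).
Proof.
  intros H1 H2 k Hk. pose proof (H1 (mkW k Hk)) as E1. pose proof (H2 (mkW k Hk)) as E2.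
  unfold mem in *; simpl in *. tauto.
Qed.

Lemma boxL (S T : W -> Prop) a b w : (forall z, S z <-> mem z a) -> (forall z, T z <-> mem z b) ->
  ((forall v, Rm S w v -> T v) <-> mem w (Box a b)).
Proof.
  intros HS HT. destruct (mem_of w) as [i0 [Hi0 Hw]]. split.
  - intro H. apply Hw. destruct (s_cut i0 (Box a b) Hi0) as [?|Hn]; auto. exfalso.
    destruct (s_nbox _ _ _ Hn) as [j [Hr Hj]].
    assert (Hv : T (mkW j (Ix_PR2 _ _ _ Hr))).
    { apply H. exists i0, j, a. split; [exact Hw|]. split; [intro; unfold mem; simpl; tauto|].
      split; [exact HS|exact Hr]. }
    apply HT in Hv. unfold mem in Hv; simpl in Hv. exact (cons j b Hv Hj).
  - intros Hb v [i [j [c [Hwi [Hvj [Hc Hr]]]]]]. apply HT. apply Hvj.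
    apply (s_box i j a b). apply Hwi; exact Hb.
    apply (Rnorm i j c a Hr). apply ext_ix with S; auto.
Qed.

Lemma diaL (S T : W -> Prop) a b w : (forall z, S z <-> mem z a) -> (forall z, T z <-> mem z b) ->
  ((exists v, Rm S w v /\ T v) <-> mem w (Dia a b)).
Proof.
  intros HS HT. destruct (mem_of w) as [i0 [Hi0 Hw]]. split.
  - intros [v [[i [j [c [Hwi [Hvj [Hc Hr]]]]]] Hv]]. apply Hwi.
    destruct (s_cut i (Dia a b) (Ix_PR1 _ _ _ Hr)) as [?|Hn]; auto. exfalso.
    apply (cons j b). apply Hvj, HT, Hv. apply (s_ndia i j a b Hn).
    apply (Rnorm i j c a Hr). apply ext_ix with S; auto.
  - intro Hd. apply Hw in Hd. destruct (s_dia _ _ _ Hd) as [j [Hr Hj]].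
    exists (mkW j (Ix_PR2 _ _ _ Hr)). split.
    + exists i0, j, a. split; [exact Hw|]. split; [intro; unfold mem; simpl; tauto|].
      split; [exact HS|exact Hr].
    + apply HT. exact Hj.
Qed.

Definition Pm (S : W -> Prop) : Prop := exists a, forall z, S z <-> mem z a.
Definition Vm (p : nat) (z : W) : Prop := mem z (Var p).

Lemma Ix1 : Ix 1.
Proof. exists 0. exists (PF 1 (Neg phi)). split; [left; reflexivity| reflexivity]. Qed.

Definition w1 : W := mkW 1 Ix1.

Lemma Vm_P p : Pm (Vm p).
Proof. exists (Var p). intro z. unfold Vm. tauto. Qed.
Lemma Pm_empty : Pm (fun _ => False).
Proof. exists Bot. intro z. pose proof (memBot z). tauto. Qed.
Lemma Pm_full : Pm (fun _ => True).
Proof. exists Top. intro z. pose proof (memTop z). tauto. Qed.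
Lemma Pm_compl S : Pm S -> Pm (fun x => ~ S x).
Proof. intros [a H]. exists (Neg a). intro z. rewrite memNeg, H. tauto. Qed.
Lemma Pm_inter S T : Pm S -> Pm T -> Pm (fun x => S x /\ T x).
Proof. intros [a H] [b H']. exists (And a b). intro z. rewrite memAnd, H, H'. tauto. Qed.
Lemma Pm_union S T : Pm S -> Pm T -> Pm (fun x => S x \/ T x).
Proof. intros [a H] [b H']. exists (Or a b). intro z. rewrite memOr, H, H'. tauto. Qed.
Lemma Pm_box S T : Pm S -> Pm T -> Pm (fun x => forall y, Rm S x y -> T y).
Proof. intros [a H] [b H']. exists (Box a b). intro z. apply boxL; auto. Qed.

Definition Mdl : SegModel :=
  {| U := W; P := Pm; R := Rm; V := Vm; U_nonempty := inhabits w1;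
     V_in_P := Vm_P; P_empty := Pm_empty; P_full := Pm_full; P_compl := Pm_compl;
     P_inter := Pm_inter; P_union := Pm_union; P_box := Pm_box |}.

Lemma truth a : forall w : W, sat Mdl a w <-> mem w a.
Proof.
  induction a; intro w; simpl.
  - unfold Vm. tauto.
  - pose proof (memBot w). tauto.
  - rewrite memNeg, IHa. tauto.
  - rewrite memImp, IHa1, IHa2. tauto.
  - rewrite memAnd, IHa1, IHa2. tauto.
  - rewrite memOr, IHa1, IHa2. tauto.
  - apply boxL; auto.
  - apply diaL; auto.
Qed.

Lemma Mdl_VC : isVC Mdl.
Proof.
  unfold isVC. simpl. intros S T x [a HS] [b HT].
  split; [|split; [|split; [|split; [|split]]]].
  - intros y [i [j [c [Hx [Hy [Hc Hr]]]]]]. apply Hc, Hy. exact (s_R1 i j c Hr).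
  - intros [y [[i [j [c [Hx [Hy [Hc Hr]]]]]] Ty]].
    assert (Hjb : Hin (PF j b)) by (apply Hy, HT, Ty).
    destruct (s_R2 i j c b Hjb Hr) as [k Hk].
    exists (mkW k (Ix_PR2 _ _ _ Hk)). exists i, k, b. split; [exact Hx|].
    split; [intro; unfold mem; simpl; tauto|]. split; [exact HT|exact Hk].
  - intros y [i [j [c [Hx [Hy [Hc Hr]]]]]].
    assert (Hr' : Hin (PR i Top j)).
    { apply (Rnorm i j c Top Hr). intros k Hk. pose proof (Hc (mkW k Hk)) as E.
      unfold mem in E; simpl in E. pose proof (topI k Hk). tauto. }
    assert (Hij : forall a, Hin (PF i a) <-> Hin (PF j a)).
    { intro a0. pose proof (Ix_PR1 _ _ _ Hr') as Hi. pose proof (Ix_PR2 _ _ _ Hr') as Hj. split.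
      - intro Ha. destruct (s_cut j a0 Hj) as [?|Hn]; auto. exact (s_R3 i j a0 Ha Hn Hr').
      - intro Ha. destruct (s_cut i a0 Hi) as [?|Hn]; auto. exfalso.
        destruct (s_cut j (Neg a0) Hj) as [Hn'|Hnn].
        + exact (cons j a0 Ha Hn').
        + exact (cons j a0 Ha (s_R3 i j (Neg a0) Hn Hnn Hr')). }
    destruct x as [X HX]. destruct y as [Y HY]. unfold mem in Hx, Hy; simpl in Hx, Hy.
    assert (XY : Y = X).
    { apply functional_extensionality. intro a0. apply propositional_extensionality.
      rewrite Hx, Hy. symmetry. apply Hij. }
    subst Y. f_equal. apply proof_irrelevance.
  - destruct (mem_of x) as [i [Hi Hx]]. exists i, i, Top. split; [exact Hx|].
    split; [exact Hx|]. split.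
    + intro z. pose proof (memTop z). tauto.
    + apply s_R4; auto.
  - intros y [[i [j [c [Hx [Hy [Hc Hr]]]]]] Ty]. exists i, j, (And c b).
    split; [exact Hx|]. split; [exact Hy|]. split.
    + intro z. rewrite memAnd, <- Hc, <- HT. tauto.
    + apply s_R5; [apply Hy, HT, Ty | exact Hr].
  - intros [y0 [[i [j [c [Hx [Hy [Hc Hr]]]]]] Ty]] y [i' [j' [d [Hx' [Hy' [Hd Hr']]]]]].
    assert (Hjb : Hin (PF j b)) by (apply Hy, HT, Ty).
    assert (Hid : Hin (PF i (Dia c b))).
    { destruct (s_cut i (Dia c b) (Ix_PR1 _ _ _ Hr)) as [?|Hn]; auto. exfalso.
      exact (cons j b Hjb (s_ndia i j c b Hn Hr)). }
    assert (Hid' : Hin (PF i' (Dia c b))) by (apply Hx', Hx, Hid).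
    destruct (s_dia _ _ _ Hid') as [k [Hk1 Hk2]].
    assert (Hr2 : Hin (PR i' (And c b) j')).
    { apply (Rnorm i' j' d (And c b) Hr'). intros k0 Hk0.
      pose proof (Hd (mkW k0 Hk0)) as E1. pose proof (Hc (mkW k0 Hk0)) as E2.
      pose proof (HT (mkW k0 Hk0)) as E3. pose proof (andI k0 c b Hk0) as E4.
      unfold mem in *; simpl in *. tauto. }
    destruct (s_R6 i' k j' c b Hk2 Hk1 Hr2) as [H1 H2]. split.
    + exists i', j', c. split; [exact Hx'|]. split; [exact Hy'|]. split; [exact Hc|exact H2].
    + apply HT, Hy', H1.
Qed.

Lemma countermodel : exists (M : SegModel) (x : U M), isVC M /\
  (forall psi, Gamma psi -> sat M psi x) /\ ~ sat M phi x.
Proof.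
  exists Mdl, w1. split; [exact Mdl_VC|]. split.
  - intros psi H. apply truth. unfold w1, mem; simpl. apply s_assum; auto.
  - intro H. apply truth in H. unfold w1, mem in H; simpl in H.
    apply (cons 1 phi H). exists 0. left. reflexivity.
Qed.

End Compl.

Theorem mainTheorem10 (Gamma : form -> Prop) (phi : form) :
  VC_consequence Gamma phi -> VC_derivable Gamma phi.
Proof.
  intro HC. unfold VC_derivable. apply NNPP. intro Hn.
  destruct (countermodel Gamma phi Hn) as [M [x [HV [HG Hp]]]].
  apply Hp. apply HC; auto.
Qed.
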